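(* For $j\in\{0,1,2,3\}$ let $$\mathcal{F}_j(\tau)=\sum_{\Delta\ge0}c\Big(\frac{\Delta+j^2}{8},j\Big)q^{\Delta/8},$$ where $c(n,r)=0$ unless $n\in\mathbb{N}_0$, in which case $c(n,r)=\sum_{d\mid\gcd(n,r,2),\,d>0}d\,H\big(\frac{8n-r^2}{d^2}\big)$. Define $\beta_0(n),\beta_1(n)$ by $\frac{4800}{\eta(\tau)^6}\mathcal{F}_j(\tau)=\sum_{n\ge0}\beta_j(n)q^{n-\alpha_j}$ with $\alpha_0=\frac14$, $\alpha_1=\frac38$; let $\mathcal{H}_1(\tau)=\sum_{n\ge0}H(4n+3)q^{n+\frac34}$ and define $\gamma(n)$ by $\frac{4800}{\eta(\tau)^6}\mathcal{H}_1(\tau)=\sum_{n\ge0}\gamma(n)q^{n-\frac12}$; and let $p_6(n)$ be defined by $\sum_{n\ge0}p_6(n)q^n=\prod_{\ell\ge1}(1-q^\ell)^{-6}$. Then for all integers $n\ge0$, $$-\beta_0(n)\le1200\,p_6(n),\qquad \beta_1(n)\le\gamma(2n).$$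
   Context: $q=e^{2\pi i\tau}$, $\eta(\tau)=q^{1/24}\prod_{n\ge1}(1-q^n)$. For an integer $N$, $H(N)$ is the Hurwitz–Kronecker class number: $H(0)=-1/12$; $H(N)=0$ if $N<0$ or $N\equiv1,2\pmod4$; for $N>0$, $N\equiv0,3\pmod4$, $H(N)$ is the number of $\mathrm{SL}_2(\mathbb{Z})$-classes of positive definite integral binary quadratic forms of discriminant $-N$, classes of forms equivalent to a multiple of $x^2+y^2$ (resp. $x^2+xy+y^2$) weighted by $1/2$ (resp. $1/3$). $p_6(n)$ is the number of partitions of $n$ into parts of $6$ colors. *)

(* Defs.v *)
From Stdlib Require Import ClassicalEpsilon.
From mathcomp Require Import all_boot all_order all_algebra.
Set Implicit Arguments. Unset Strict Implicit. Unset Printing Implicit Defensive.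
Import Order.TTheory GRing.Theory Num.Theory.
Local Open Scope ring_scope.

(* A binary quadratic form a x^2 + b x y + c y^2 with integer coefficients. *)
Definition form := (int * int * int)%type.
Definition fa (f : form) : int := f.1.1.
Definition fb (f : form) : int := f.1.2.
Definition fc (f : form) : int := f.2.

Definition disc (f : form) : int := fb f ^+ 2 - 4 * fa f * fc f.

Definition posdef (f : form) : Prop := 0 < fa f /\ disc f < 0.

(* f transformed by gamma = [[p,q],[r,s]] : f(p x + q y, r x + s y) *)
Definition act (f : form) (p q r s : int) : form :=
  (fa f * p ^+ 2 + fb f * p * r + fc f * r ^+ 2,
   2 * fa f * p * q + fb f * (p * s + q * r) + 2 * fc f * r * s,
   fa f * q ^+ 2 + fb f * q * s + fc f * s ^+ 2).

Definition sl2_equiv (f g : form) : Prop :=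
  exists p q r s : int, p * s - q * r = 1 /\ g = act f p q r s.

Definition class_weight (f : form) : rat :=
  if excluded_middle_informative (exists k : int, sl2_equiv f (k, 0, k)) then 1 / 2
  else if excluded_middle_informative (exists k : int, sl2_equiv f (k, k, k)) then 1 / 3
  else 1.

Definition class_reps (N : int) (s : seq form) : Prop :=
  (forall f, f \in s -> posdef f /\ disc f = - N) /\
  (forall i j : nat, (i < j < size s)%N -> ~ sl2_equiv (nth (0,0,0) s i) (nth (0,0,0) s j)) /\
  (forall g, posdef g -> disc g = - N -> exists2 f, f \in s & sl2_equiv f g).

Definition reps (N : int) : seq form :=
  epsilon (inhabits [::]) (class_reps N).

Definition H (N : int) : rat :=
  if N == 0 then - (1 / 12)
  else if N < 0 then 0
  else if ((N %% 4)%Z == 1) || ((N %% 4)%Z == 2) then 0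
  else \sum_(f <- reps N) class_weight f.

Definition is_nat_rat (x : rat) : bool := (denq x == 1) && (0 <= numq x).

Definition cnr (n : rat) (r : int) : rat :=
  if is_nat_rat n then
    let m := numq n in
    \sum_(d <- divisors (gcdn (gcdn `|m|%N `|r|%N) 2))
       d%:R * H (((8 * m - r ^+ 2) %/ (d ^ 2)%:Z)%Z)
  else 0.

Definition Fcoef (j : int) (Delta : nat) : rat :=
  cnr ((Delta%:R + (j ^+ 2)%:~R) / 8) j.

(* p_6(n): number of partitions of n into parts of 6 colours, i.e. multiplicity
   functions (colour, part size i.+1) |-> multiplicity with total weight n *)
Definition p6 (n : nat) : nat :=
  #|[set f : {ffun 'I_6 * 'I_n -> 'I_n.+1} |
       (\sum_(i : 'I_6 * 'I_n) (i.2.+1 * f i)%N == n)%N]|.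

(* 4800/eta^6 * F_j = 4800 q^(-1/4) (sum_m p6 m q^m) (sum_Delta Fcoef j Delta q^(Delta/8));
   beta_j(n) = coefficient of q^(n - alpha) *)
Definition beta (j : int) (alpha : rat) (n : nat) : rat :=
  4800 * \sum_(m < n.+1)
     (p6 m)%:R *
     (let D : rat := 8 * (n%:R - alpha + 1 / 4 - m%:R) in
      if is_nat_rat D then Fcoef j `|numq D|%N else 0).

Definition beta0 := beta 0 (1 / 4).
Definition beta1 := beta 1 (3 / 8).

(* 4800/eta^6 * H_1, H_1 = sum_k H(4k+3) q^(k+3/4); gamma(n) = coeff of q^(n - 1/2) *)
Definition gamma (n : nat) : rat :=
  4800 * \sum_(m < n.+1)
     (p6 m)%:R *
     (let K : rat := n%:R - 1 / 2 + 1 / 4 - m%:R - 3 / 4 in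
      if is_nat_rat K then H (4 * numq K + 3) else 0).

(* Main.v *)
Require Import Defs.
From Stdlib Require Import ClassicalEpsilon.
From mathcomp Require Import all_boot all_order all_algebra.
Import Order.TTheory GRing.Theory Num.Theory.
Local Open Scope ring_scope.

Lemma natQ (k : nat) : (k%:R : rat) = (k%:Z)%:Q.
Proof. by rewrite pmulrn. Qed.

Lemma isnat_nat (k : nat) : is_nat_rat k%:R.
Proof. by rewrite /is_nat_rat natQ numq_int denq_int eqxx /=. Qed.

Lemma numq_nat (k : nat) : numq (k%:R : rat) = k%:Z.
Proof. by rewrite natQ numq_int. Qed.

Lemma H_ge0 N : N != 0 -> 0 <= H N.
Proof.
rewrite /H => /negbTE ->. case: ifP => // _. case: ifP => // _.
apply: sumr_ge0 => f _. rewrite /class_weight.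
by do 2 destruct (excluded_middle_informative _).
Qed.

Lemma H0 : H 0 = - (1/12). Proof. by rewrite /H eqxx. Qed.

Lemma c00 : cnr 0 0 = - (1/4).
Proof.
rewrite /cnr (isnat_nat 0) /=. have -> : numq 0 = 0 by [].
have -> : divisors 2 = [:: 1; 2]%N by [].
rewrite big_cons big_seq1 /=.
rewrite !divz_nat /= !H0. done.
Qed.

Section P6.
Variable m : nat.
Definition Fv (f : {ffun 'I_6 * 'I_m -> 'I_m.+1}) (p : 'I_6 * 'I_m.+1) : nat :=
  if insub (val p.2) is Some j then val (f (p.1, j)) else 0%N.

Lemma Fv_le f p : (Fv f p <= m)%N.
Proof. rewrite /Fv; case: insub => [j|] //. by rewrite -ltnS ltn_ord. Qed.

Definition p0 : 'I_6 * 'I_m.+1 := (ord0, ord0).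

Definition ext (f : {ffun 'I_6 * 'I_m -> 'I_m.+1}) : {ffun 'I_6 * 'I_m.+1 -> 'I_m.+2} :=
  [ffun p => inord (Fv f p + (p == p0))%N].

Lemma ext_val f p : val (ext f p) = (Fv f p + (p == p0))%N.
Proof.
rewrite ffunE /= inordK // ltnS; have := Fv_le f p; case: (p == p0) => /= H; [by rewrite addn1|by rewrite addn0 (leq_trans H)].
Qed.

Lemma ext_inj : injective ext.
Proof.
move=> f1 f2 E; apply/ffunP => p.
have := congr1 (fun g : {ffun _ -> _} => val (g (p.1, widen_ord (leqnSn m) p.2))) E.
rewrite /= !ext_val /Fv /= valK /= => /addIn H1.
by apply: val_inj; case: p H1.
Qed.

Lemma ext_wt f :
  (\sum_(i : 'I_6 * 'I_m.+1) (i.2.+1 * ext f i))%N =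
  ((\sum_(i : 'I_6 * 'I_m) (i.2.+1 * f i)) + 1)%N.
Proof.
under eq_bigr => i _ do rewrite ext_val mulnDr.
rewrite big_split /=; congr addn.
  rewrite -(pair_bigA _ (fun c (j : 'I_m.+1) => j.+1 * Fv f (c, j)))%N /=.
  rewrite (eq_bigr (fun p : 'I_6 * 'I_m => p.2.+1 * f (p.1, p.2))%N); last by case.
  rewrite -(pair_bigA _ (fun c (j : 'I_m) => j.+1 * f (c, j)))%N /=.
  apply: eq_bigr => c _; rewrite big_ord_recr /= /Fv /= insubF ?ltnn // muln0 addn0.
  by apply: eq_bigr => j _; rewrite /= valK.
rewrite (bigD1 p0) // eqxx big1 ?addn0 // => p /andP [] _ /negbTE -> ; by rewrite muln0.
Qed.
End P6.

Lemma p6S m : (p6 m <= p6 m.+1)%N.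
Proof.
rewrite /p6 -(card_in_imset (f := @ext m)); last by move=> x y _ _; apply: ext_inj.
apply: subset_leq_card; apply/subsetP => g /imsetP [f Hf ->].
by rewrite inE ext_wt; rewrite inE in Hf; rewrite (eqP Hf) addn1.
Qed.

Lemma p6_mono m k : (m <= k)%N -> (p6 m <= p6 k)%N.
Proof.
move=> /subnK <-; elim: (k - m)%N => // d IH.
by rewrite addSn; apply: leq_trans IH (p6S _).
Qed.
From mathcomp Require Import ring lra zify.

Lemma cnrk0 (k : nat) : (0 < k)%N -> 0 <= cnr k%:R 0.
Proof.
move=> k0; rewrite /cnr isnat_nat /= numq_nat.
rewrite big_seq; apply: sumr_ge0 => d Hd.
have g0 : (0 < gcdn (gcdn `|k%:Z|%N `|0%R|%N) 2)%N by rewrite gcdn_gt0 orbT.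
have := Hd; rewrite -dvdn_divisors // => dv.
have d0 : (0 < d)%N by apply: dvdn_gt0 dv.
have d2 : (d <= 2)%N by apply: leq_trans (dvdn_leq g0 dv) _; apply: dvdn_leq => //; apply: dvdn_gcdr.
apply: mulr_ge0; first by rewrite ler0n.
apply: H_ge0.
have -> : (8 * k%:Z - 0 ^+ 2 = (8 * k)%N%:Z)%R by rewrite expr0n /= subr0 PoszM.
rewrite divz_nat eqz_nat -lt0n divn_gt0 ?expn_gt0 ?d0 //.
have : (d ^ 2 <= 2 ^ 2)%N by rewrite leq_exp2r. by move=> h; apply: leq_trans h _; lia.
Qed.

Lemma T0_lt (n m : nat) : (m < n)%N -> 0 <= (if is_nat_rat (8 * (n%:R - 1/4 + 1/4 - m%:R)) then Fcoef 0 `|numq (8 * (n%:R - 1/4 + 1/4 - m%:R))|%N else 0).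
Proof.
move=> mn /=.
have -> : 8 * (n%:R - 1/4 + 1/4 - m%:R) = ((8*(n-m))%N)%:R :> rat.
  by rewrite subrK natrM natrB // ltnW.
rewrite isnat_nat numq_nat /Fcoef /=.
have -> : (((8*(n-m))%N)%:R + ((0:int)^+2)%:~R)/8 = ((n-m)%N)%:R :> rat.
  by rewrite expr0n /= addr0 natrM mulrC mulKf.
apply: cnrk0; lia.
Qed.

Lemma T0_n (n : nat) : (if is_nat_rat (8 * (n%:R - 1/4 + 1/4 - n%:R)) then Fcoef 0 `|numq (8 * (n%:R - 1/4 + 1/4 - n%:R))|%N else 0) = - (1/4).
Proof.
rewrite /= subrK subrr mulr0 (isnat_nat 0) /Fcoef /=.
by rewrite expr0n /= add0r mul0r c00.
Qed.

Lemma part1 n : - beta0 n <= 1200 * (p6 n)%:R.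
Proof.
rewrite /beta0 /beta big_ord_recr /= T0_n.
set S := \sum_(i < n) _.
have S0 : 0 <= S.
  apply: sumr_ge0 => i _; apply: mulr_ge0; first by rewrite ler0n.
  exact: T0_lt.
lra.
Qed.

Lemma predQ (a k : nat) : (0 < a * k)%N -> (((a * k).-1)%N%:R : rat) = a%:R * k%:R - 1.
Proof. by move=> h; rewrite -subn1 natrB // natrM. Qed.

Lemma T1_lt (n m : nat) : (m < n)%N ->
  (if is_nat_rat (8 * (n%:R - 3/8 + 1/4 - m%:R)) then Fcoef 1 `|numq (8 * (n%:R - 3/8 + 1/4 - m%:R))|%N else 0)
  = H (8 * (n - m)%N%:Z - 1).
Proof.
move=> mn.
have E : (n%:R : rat) = (n-m)%N%:R + m%:R by rewrite -natrD subnK // ltnW.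
have -> : 8 * (n%:R - 3/8 + 1/4 - m%:R) = ((8*(n-m)).-1)%N%:R :> rat.
  rewrite predQ; last by lia.
  rewrite E; set k : rat := (n-m)%N%:R; lra.
rewrite isnat_nat numq_nat /Fcoef /=.
have -> : (((8*(n-m)).-1)%N%:R + ((1:int)^+2)%:~R)/8 = ((n-m)%N)%:R :> rat.
  rewrite predQ; last by lia.
  by rewrite expr1n /= subrK mulrC mulKf.
rewrite /cnr isnat_nat numq_nat /= gcdn1 /=.
have -> : divisors 1 = [:: 1%N] by [].
by rewrite big_seq1 mul1r expr1n divz1.
Qed.

Lemma T1_n (n : nat) :
  (if is_nat_rat (8 * (n%:R - 3/8 + 1/4 - n%:R)) then Fcoef 1 `|numq (8 * (n%:R - 3/8 + 1/4 - n%:R))|%N else 0) = 0.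
Proof.
have -> : 8 * (n%:R - 3/8 + 1/4 - n%:R) = -1 :> rat.
  set k : rat := n%:R; lra.
by [].
Qed.

Lemma T2_ge0 (N m : nat) : 0 <=
  (if is_nat_rat (N%:R - 1 / 2 + 1 / 4 - m%:R - 3 / 4) then H (4 * numq (N%:R - 1 / 2 + 1 / 4 - m%:R - 3 / 4) + 3) else 0).
Proof.
case: ifP => // /andP [_ h]; apply: H_ge0; lia.
Qed.

Lemma T2_even (n m : nat) : (m < n)%N ->
  (if is_nat_rat ((2 * n)%N%:R - 1 / 2 + 1 / 4 - (2 * m)%N%:R - 3 / 4) then H (4 * numq ((2 * n)%N%:R - 1 / 2 + 1 / 4 - (2 * m)%N%:R - 3 / 4) + 3) else 0)
  = H (8 * (n - m)%N%:Z - 1).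
Proof.
move=> mn.
have E : (n%:R : rat) = (n-m)%N%:R + m%:R by rewrite -natrD subnK // ltnW.
have -> : (2 * n)%N%:R - 1 / 2 + 1 / 4 - (2 * m)%N%:R - 3 / 4 = ((2*(n-m)).-1)%N%:R :> rat.
  rewrite predQ; last by lia.
  rewrite !natrM E; set k : rat := (n-m)%N%:R; lra.
rewrite isnat_nat numq_nat; congr H.
rewrite -subn1; lia.
Qed.

Lemma sum_even (b : nat -> rat) : (forall i, 0 <= b i) -> forall n,
  \sum_(m < n.+1) b (2 * m)%N <= \sum_(m < (2 * n).+1) b m.
Proof.
move=> hb; elim=> [|n IH]; first by rewrite !big_ord_recr !big_ord0.
have E : (2 * n.+1 = (2 * n).+2)%N by rewrite mulnS.
rewrite [X in X <= _]big_ord_recr /= E.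
rewrite [X in _ <= X]big_ord_recr [X in _ <= X + _]big_ord_recr /=.
apply: lerD => //; apply: le_trans IH _; by rewrite lerDl.
Qed.

Lemma part2 n : beta1 n <= gamma (2 * n)%N.
Proof.
rewrite /beta1 /beta /gamma /=; apply: ler_wpM2l => //.
set b := fun m : nat => (p6 m)%:R *
  (if is_nat_rat ((2 * n)%N%:R - 1 / 2 + 1 / 4 - m%:R - 3 / 4) then H (4 * numq ((2 * n)%N%:R - 1 / 2 + 1 / 4 - m%:R - 3 / 4) + 3) else 0).
have hb : forall i, 0 <= b i.
  by move=> i; apply: mulr_ge0; [rewrite ler0n | apply: T2_ge0].
apply: (le_trans _ (sum_even b hb n)).
apply: ler_sum => i _; rewrite /b.
have := ltn_ord i; rewrite ltnS leq_eqVlt => /orP [/eqP ->|lt].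
  by rewrite T1_n mulr0; apply: mulr_ge0; [rewrite ler0n | apply: T2_ge0].
rewrite T1_lt // T2_even //; apply: ler_wpM2r.
  by apply: H_ge0; lia.
by rewrite ler_nat; apply: p6_mono; lia.
Qed.

Theorem lemma5p2 (n : nat) :
  - beta0 n <= 1200 * (p6 n)%:R /\ beta1 n <= gamma (2 * n)%N.
Proof. by split; [apply: part1 | apply: part2]. Qed.
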